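(* Let $\lambda\in\Pi(\mu,\nu,\gamma)$. (1) If $\lambda$ is an extreme point of $\Pi(\mu,\nu,\gamma)$, then it is an extreme point of $\Pi(\lambda^{XY},\gamma)$, of $\Pi(\lambda^{YZ},\mu)$ and of $\Pi(\lambda^{XZ},\nu)$. (2) If $\lambda$ is an extreme point of $\Pi(\lambda^{XY},\gamma)$ and $\lambda^{XY}$ is an extreme point of $\Pi(\mu,\nu)$, then $\lambda$ is an extreme point of $\Pi(\mu,\nu,\gamma)$. (3) Assume $\lambda=(\nu^x\times\gamma^x)\otimes\mu$, where $\lambda^{XY}=\nu^x\otimes\mu$ and $\lambda^{XZ}=\gamma^x\otimes\mu$. (a) If $\lambda$ is an extreme point of $\Pi(\lambda^{XY},\gamma)$, then $\lambda^{XZ}$ is an extreme point of $\Pi(\mu,\gamma)$. (b) If $\lambda$ is an extreme point of both $\Pi(\lambda^{XY},\gamma)$ and $\Pi(\lambda^{XZ},\nu)$, then $\lambda$ is an extreme point of $\Pi(\mu,\nu,\gamma)$.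
   Context: $X,Y,Z$ are complete separable metric spaces with Borel probability measures $\mu,\nu,\gamma$; $\Pi(\mu,\nu,\gamma)$ is the set of Borel probability measures on $X\times Y\times Z$ with those marginals; $\Pi(\mu,\nu)$, $\Pi(\mu,\gamma)$ similarly. $\lambda^{XY},\lambda^{YZ},\lambda^{XZ}$ are the push-forwards of $\lambda$ under the projections onto $X\times Y$, $Y\times Z$, $X\times Z$. $\Pi(\lambda^{XY},\gamma)=\{\rho\in\Pi(\mu,\nu,\gamma):\rho^{XY}=\lambda^{XY}\}$, and analogously $\Pi(\lambda^{YZ},\mu)$, $\Pi(\lambda^{XZ},\nu)$. For a measure $\sigma$ on $A$ and a measurable family $(\eta^a)$ of probability measures on $B$, $(\eta^a\otimes\sigma)(E\times F)=\int_E\eta^a(F)d\sigma(a)$; $\nu^x\times\gamma^x$ is the product measure on $Y\times Z$. *)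

(* Defs.v *)
From HB Require Import structures.
From mathcomp Require Import all_boot all_order all_algebra.
From mathcomp Require Import all_classical all_reals all_analysis.
Set Implicit Arguments. Unset Strict Implicit. Unset Printing Implicit Defensive.
Import Order.TTheory GRing.Theory Num.Theory.
Local Open Scope classical_set_scope.
Local Open Scope ring_scope.

Definition separable_space (T : topologicalType) : Prop :=
  exists D : set T, countable D /\ dense D.

Definition Borel (T : topologicalType) := g_sigma_algebraType (@open T).

Section Defs.
Context {R : realType}.
Local Open Scope ereal_scope.

Definition is_prob {d} {T : measurableType d} (m : set T -> \bar R) : Prop :=
  exists P : probability T R, forall A, measurable A -> P A = m A.

Definition projXY {dX dY dZ} {X : measurableType dX} {Y : measurableType dY}
  {Z : measurableType dZ} (l : set (X * Y * Z) -> \bar R) : set (X * Y) -> \bar R :=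
  fun E => l ((fun p => p.1) @^-1` E).
Definition projYZ {dX dY dZ} {X : measurableType dX} {Y : measurableType dY}
  {Z : measurableType dZ} (l : set (X * Y * Z) -> \bar R) : set (Y * Z) -> \bar R :=
  fun E => l ((fun p => (p.1.2, p.2)) @^-1` E).
Definition projXZ {dX dY dZ} {X : measurableType dX} {Y : measurableType dY}
  {Z : measurableType dZ} (l : set (X * Y * Z) -> \bar R) : set (X * Z) -> \bar R :=
  fun E => l ((fun p => (p.1.1, p.2)) @^-1` E).
Definition proj1 {dX dY} {X : measurableType dX} {Y : measurableType dY}
  (l : set (X * Y) -> \bar R) : set X -> \bar R :=
  fun E => l ((fun p => p.1) @^-1` E).
Definition proj2 {dX dY} {X : measurableType dX} {Y : measurableType dY}
  (l : set (X * Y) -> \bar R) : set Y -> \bar R :=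
  fun E => l ((fun p => p.2) @^-1` E).

Definition meq {d} {T : measurableType d} (m1 m2 : set T -> \bar R) : Prop :=
  forall A, measurable A -> m1 A = m2 A.

Definition Pi2 {dX dY} {X : measurableType dX} {Y : measurableType dY}
  (mu : set X -> \bar R) (nu : set Y -> \bar R) : set (set (X * Y) -> \bar R) :=
  [set r | is_prob r /\ meq (proj1 r) mu /\ meq (proj2 r) nu].

Definition Pi3 {dX dY dZ} {X : measurableType dX} {Y : measurableType dY}
  {Z : measurableType dZ} (mu : set X -> \bar R) (nu : set Y -> \bar R)
  (ga : set Z -> \bar R) : set (set (X * Y * Z) -> \bar R) :=
  [set r | is_prob r /\ meq (proj1 (projXY r)) mu /\
           meq (proj2 (projXY r)) nu /\ meq (proj2 (projXZ r)) ga].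

Definition PiXY {dX dY dZ} {X : measurableType dX} {Y : measurableType dY}
  {Z : measurableType dZ} (mu : set X -> \bar R) (nu : set Y -> \bar R)
  (ga : set Z -> \bar R) (l : set (X * Y * Z) -> \bar R) :=
  [set r | Pi3 mu nu ga r /\ meq (projXY r) (projXY l)].
Definition PiYZ {dX dY dZ} {X : measurableType dX} {Y : measurableType dY}
  {Z : measurableType dZ} (mu : set X -> \bar R) (nu : set Y -> \bar R)
  (ga : set Z -> \bar R) (l : set (X * Y * Z) -> \bar R) :=
  [set r | Pi3 mu nu ga r /\ meq (projYZ r) (projYZ l)].
Definition PiXZ {dX dY dZ} {X : measurableType dX} {Y : measurableType dY}
  {Z : measurableType dZ} (mu : set X -> \bar R) (nu : set Y -> \bar R)
  (ga : set Z -> \bar R) (l : set (X * Y * Z) -> \bar R) :=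
  [set r | Pi3 mu nu ga r /\ meq (projXZ r) (projXZ l)].

Definition extreme_point {d} {T : measurableType d}
  (S : set (set T -> \bar R)) (m : set T -> \bar R) : Prop :=
  S m /\
  forall (m1 m2 : set T -> \bar R) (t : R), S m1 -> S m2 -> (0 < t < 1)%R ->
    meq m (fun A => t%:E * m1 A + (1 - t)%:E * m2 A) -> meq m1 m2.

End Defs.

(* Main.v *)
Require Import Defs.
From HB Require Import structures.
From mathcomp Require Import all_boot all_order all_algebra.
From mathcomp Require Import all_classical all_reals all_analysis.
From mathcomp Require Import measurable_realfun.
Import Order.TTheory GRing.Theory Num.Theory.
Local Open Scope classical_set_scope.
Local Open Scope ring_scope.
Local Open Scope ereal_scope.

Section fpush.
Context {R : realType} d d' (T : measurableType d) (U : measurableType d')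
  (m : {finite_measure set T -> \bar R}) (f : T -> U) (mf : measurable_fun setT f).
Definition fpush (_ : measurable_fun setT f) : set U -> \bar R := fun A => m (f @^-1` A).

Let mpre A : measurable A -> measurable (f @^-1` A).
Proof. by move=> mA; rewrite -[X in measurable X]setTI; exact: mf. Qed.

Let fpush0 : fpush mf set0 = 0.
Proof. by rewrite /fpush preimage_set0 measure0. Qed.
Let fpush_ge0 A : 0 <= fpush mf A.
Proof. exact: measure_ge0. Qed.
Let fpush_sa : semi_sigma_additive (fpush mf).
Proof.
move=> F mF tF mUF; rewrite /fpush preimage_bigcup.
apply: measure_semi_sigma_additive.
- by move=> n; exact: mpre.
- apply/trivIsetP => /= i j _ _ ij; rewrite -preimage_setI.
  by move/trivIsetP : tF => /(_ _ _ _ _ ij) ->//; rewrite preimage_set0.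
- by rewrite -preimage_bigcup; exact: mpre.
Qed.
HB.instance Definition _ := isMeasure.Build _ _ _ (fpush mf) fpush0 fpush_ge0 fpush_sa.
Let fpush_fin : fin_num_fun (fpush mf).
Proof. by move=> A mA; rewrite /fpush fin_num_measure//; exact: mpre. Qed.
HB.instance Definition _ := Measure_isFinite.Build _ _ _ (fpush mf) fpush_fin.
End fpush.
Arguments fpush {R d d' T U} m {f} _.

Section dens.
Context {R : realType} d (T : measurableType d) (m : {measure set T -> \bar R})
  (k : T -> \bar R) (mk : measurable_fun [set: T] k) (k0 : forall x, 0 <= k x).
Definition dens (_ : measurable_fun [set: T] k) (_ : forall x, 0 <= k x) : set T -> \bar R :=
  fun A => \int[m]_(x in A) k x.
Let dens0 : dens mk k0 set0 = 0.
Proof. by rewrite /dens integral_set0. Qed.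
Let dens_ge0 A : 0 <= dens mk k0 A.
Proof. by apply: integral_ge0 => x _; exact: k0. Qed.
Let dens_sa : semi_sigma_additive (dens mk k0).
Proof. exact: semi_sigma_additive_nng_induced. Qed.
HB.instance Definition _ := isMeasure.Build _ _ _ (dens mk k0) dens0 dens_ge0 dens_sa.
End dens.
Arguments dens {R d T} m {k} _ _.

Section gen.
Context {R : realType}.

Lemma dens_change d (T : measurableType d) (nu : {finite_measure set T -> \bar R})
  (mu : {sigma_finite_measure set T -> \bar R}) (k : T -> \bar R) :
  measurable_fun setT k -> (forall x, 0 <= k x) ->
  (forall A, measurable A -> nu A = \int[mu]_(x in A) k x) ->
  forall h, measurable_fun setT h -> (forall x, 0 <= h x) ->
  \int[mu]_x (h x * k x) = \int[nu]_x h x.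
Proof.
move=> mk k0 nuk h mh h0.
have numu : nu `<< mu.
  apply/null_content_dominatesP => A mA muA.
  by rewrite nuk// null_set_integral//; exact: measurable_funTS.
rewrite -(Radon_Nikodym_SigmaFinite.change_of_variables numu h0 measurableT mh).
have fi := Radon_Nikodym_SigmaFinite.f_integrable numu.
apply: ae_eq_integral => //.
- exact: emeasurable_funM.
- apply: emeasurable_funM => //; exact: measurable_int fi.
apply: ae_eqe_mul2l; apply: ae_eq_sym; apply: integral_ae_eq => //.
move=> E _ mE; rewrite -nuk//.
by rewrite -Radon_Nikodym_SigmaFinite.f_integral.
Qed.

Lemma is_probP d (T : measurableType d) (m : {measure set T -> \bar R}) :
  m setT = 1 -> is_prob m.
Proof.
move=> m1; exists (mnormalize m (dirac point)) => A mA.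
by rewrite /= /mnormalize m1 onee_eq0 /= invr1 mule1.
Qed.


Lemma patch_indic d (T : measurableType d) (D : set T) (h : T -> \bar R) x :
  (h \_ D) x = h x * (\1_D x)%:E.
Proof.
rewrite patchE indicE; case: ifPn => _; first by rewrite mule1.
by rewrite mule0.
Qed.

Lemma mrestr_int d (T : measurableType d) (m : {finite_measure set T -> \bar R})
  (D : set T) (mD : measurable D) (h : T -> \bar R) :
  measurable_fun setT h -> (forall x, 0 <= h x) ->
  \int[mrestr m mD]_x h x = \int[m]_(x in D) h x.
Proof.
move=> mh h0.
rewrite -(@dens_change _ _ (mrestr m mD) m (fun x => (\1_D x)%:E)) //.
- by rewrite [RHS]integral_mkcond; apply: eq_integral => x _; rewrite patch_indic.
- by apply/measurable_EFinP; exact: measurable_indic.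
- by move=> A mA; rewrite integral_indic// /mrestr setIC.
Qed.


Lemma preT d d' (T : measurableType d) (U : measurableType d') (f : T -> U) :
  measurable_fun setT f -> forall A, measurable A -> measurable (f @^-1` A).
Proof. by move=> mf A mA; rewrite -[X in measurable X]setTI; exact: mf. Qed.

Lemma int_patch d (T : measurableType d) (m : {measure set T -> \bar R}) D1 D2 (f1 f2 : T -> \bar R) :
  (forall x, (f1 \_ D1) x = (f2 \_ D2) x) ->
  \int[m]_(x in D1) f1 x = \int[m]_(x in D2) f2 x.
Proof.
by move=> h; rewrite integral_mkcond [RHS]integral_mkcond; apply: eq_integral => x _.
Qed.

Lemma prod_unique dX dY (X : measurableType dX) (Y : measurableType dY)
  (m1 m2 : {measure set (X * Y) -> \bar R}) : m1 setT < +oo ->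
  (forall A B, measurable A -> measurable B -> m1 (A `*` B) = m2 (A `*` B)) ->
  forall E, measurable E -> m1 E = m2 E.
Proof.
move=> m1oo hAB E mE.
apply: (measure_unique [set A `*` B | A in measurable & B in measurable] (fun _ => setT)) => //.
- exact: measurable_prod_measurableType.
- move=> U V [U1 mU1 [U2 mU2 <-]] [V1 mV1 [V2 mV2 <-]].
  exists (U1 `&` V1); first exact: measurableI.
  by exists (U2 `&` V2); [exact: measurableI|rewrite setXI].
- by move=> _; exists setT => //; exists setT => //; rewrite setXTT.
- by rewrite bigcup_const.
- by move=> _ [A mA [B mB <-]]; exact: hAB.
Qed.


Lemma conv0 (t : R) (a b : \bar R) : (0 < t < 1)%R -> 0 <= a -> 0 <= b ->
  t%:E * a + (1 - t)%:E * b = 0 -> a = 0 /\ b = 0.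
Proof.
move=> /andP[t0 t1] a0 b0 /eqP.
have t0' : (0 <= t%:E) by rewrite lee_fin ltW.
have t1' : (0 <= (1 - t)%:E) by rewrite lee_fin subr_ge0 ltW.
rewrite padde_eq0; [|exact: mule_ge0|exact: mule_ge0].
move=> /andP[]; rewrite !mule_eq0 !eqe (gt_eqF t0) subr_eq0 (gt_eqF t1) /=.
by move=> /eqP -> /eqP ->.
Qed.

Lemma is_prob_meq d (T : measurableType d) (m1 m2 : set T -> \bar R) :
  is_prob m1 -> meq m1 m2 -> is_prob m2.
Proof. by move=> [Q hQ] h12; exists Q => A mA; rewrite hQ// h12. Qed.

End gen.

Section three.
Context {R : realType} dX dY dZ (X : measurableType dX) (Y : measurableType dY)
  (Z : measurableType dZ).
Variables (mu : probability X R) (nu : set Y -> \bar R) (ga : set Z -> \bar R)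
  (l : set (X * Y * Z)%type -> \bar R) (hl : Pi3 mu nu ga l)
  (P : probability (X * Y * Z)%type R) (hP : meq P l)
  (nux : R.-pker X ~> Y) (gax : R.-pker X ~> Z).
Hypothesis H3 : forall A B C, measurable A -> measurable B -> measurable C ->
        l (A `*` B `*` C) = \int[mu]_(x in A) (nux x B * gax x C).
Hypothesis HXY : forall A B, measurable A -> measurable B ->
        projXY l (A `*` B) = \int[mu]_(x in A) nux x B.
Hypothesis HXZ : forall A C, measurable A -> measurable C ->
        projXZ l (A `*` C) = \int[mu]_(x in A) gax x C.

Definition piXZ (p : (X * Y * Z)%type) : (X * Z)%type := (p.1.1, p.2).
Lemma mpiXZ : measurable_fun setT piXZ.
Proof.
apply: measurable_fun_pair; last exact: measurable_snd.
exact: measurableT_comp.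
Qed.

Let L := fpush P mpiXZ.

Lemma L_rect A C : measurable A -> measurable C ->
  L (A `*` C) = \int[mu]_(x in A) gax x C.
Proof.
move=> mA mC; rewrite -HXZ//.
rewrite /L /fpush /= hP//; apply: preT; [exact: mpiXZ|exact: measurableX].
Qed.

Lemma S1 C (mC : measurable C) (phi : X -> \bar R) :
  measurable_fun setT phi -> (forall x, 0 <= phi x) ->
  \int[mu]_x (phi x * gax x C) = \int[L]_(u in setT `*` C) phi u.1.
Proof.
move=> mphi phi0.
have mTC : measurable (@setT X `*` C) by apply: measurableX.
pose rho := fpush (mrestr L mTC) (@measurable_fst _ _ X Z).
rewrite (@dens_change _ _ _ rho mu (fun x => gax x C)) //.
- rewrite (_ : \int[rho]_x phi x = \int[mrestr L mTC]_x (phi \o fst) x).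
    rewrite mrestr_int //; [exact: (measurableT_comp mphi measurable_fst)|by move=> x; exact: phi0].
  rewrite (@ge0_integral_pushforward _ _ _ _ _ fst measurable_fst (mrestr L mTC) setT phi) //.
- exact: measurable_kernel.
- move=> A mA; rewrite -L_rect//; rewrite /rho /fpush /mrestr /=; congr (L _).
  by rewrite -setXT -setXI setIT setTI.
Qed.


Lemma mkern {dW} {W : measurableType dW} (k : R.-pker X ~> W) {B} : measurable B -> measurable_fun setT (fun x => k x B).
Proof. by move=> mB; exact: measurable_kernel. Qed.

Lemma S2 B (mB : measurable B) (h : (X * Z)%type -> \bar R) :
  measurable_fun setT h -> (forall u, 0 <= h u) ->
  \int[L]_u (h u * nux u.1 B) = \int[P]_(w in setT `*` B `*` setT) h (piXZ w).
Proof.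
move=> mh h0.
have mYB : measurable (@setT X `*` B `*` @setT Z).
  by apply: measurableX => //; apply: measurableX.
pose M := fpush (mrestr P mYB) mpiXZ.
have mkB : measurable_fun setT (fun u : (X * Z)%type => nux u.1 B).
  exact: (measurableT_comp (mkern nux mB) measurable_fst).
have kB0 : forall u : (X * Z)%type, 0 <= nux u.1 B by move=> u; exact: measure_ge0.
have MN : forall D, measurable D -> M D = \int[L]_(u in D) nux u.1 B.
  move=> D mD.
  apply: (@prod_unique _ _ _ _ _ M (dens L mkB kB0)) => //.
  - exact: (fin_num_fun_lty (fin_num_measure M)).
  - move=> A C mA mC.
    rewrite /M /fpush /= /mrestr /dens /=.
    have -> : piXZ @^-1` (A `*` C) `&` (setT `*` B `*` setT) = A `*` B `*` C.
      apply/seteqP; split => -[[x y] z] /=.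
        by move=> [[xA zC] [[_ yB] _]].
      by move=> [[xA yB] zC].
    rewrite hP; last by apply: measurableX => //; apply: measurableX.
    rewrite H3 //.
    pose phi := (fun x => nux x B) \_ A.
    have mphi : measurable_fun setT phi.
      exact: ((measurable_restrictT (fun x => nux x B) mA).1 (measurable_funTS (mkern nux mB))).
    have phi0 : forall x, 0 <= phi x.
      by move=> x; rewrite /phi patchE; case: ifPn.
    transitivity (\int[mu]_x (phi x * gax x C)).
      apply: int_patch => x; rewrite !patchE in_setT /phi patchE.
      by case: (x \in A) => //; rewrite mul0e.
    rewrite S1 //; apply: int_patch => -[x z].
    rewrite !patchE !in_setX in_setT /= /phi patchE.
    by case: (x \in A); case: (z \in C).
rewrite (@dens_change _ _ _ M L _ mkB kB0 MN h mh h0).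
transitivity (\int[mrestr P mYB]_x (h \o piXZ) x).
  exact: (@ge0_integral_pushforward _ _ _ _ _ piXZ mpiXZ (mrestr P mYB) setT h
    measurableT (measurable_funTS mh) (fun u _ => h0 u)).
rewrite mrestr_int //; first exact: (measurableT_comp mh mpiXZ).
by move=> w; exact: h0.
Qed.


Lemma S3 (Q : probability (X * Z)%type R) (HQ1 : meq (proj1 Q) mu)
  (HQ2 : meq (proj2 Q) ga) (QL : Q `<< L) :
  let f := Radon_Nikodym_SigmaFinite.f Q L in
  PiXY mu nu ga l (fun E => \int[P]_(w in E) f (piXZ w)) /\
  (forall D, measurable D -> \int[P]_(w in piXZ @^-1` D) f (piXZ w) = Q D).
Proof.
move=> f.
have f0 : forall u, 0 <= f u := Radon_Nikodym_SigmaFinite.f_ge0 QL.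
have fint := Radon_Nikodym_SigmaFinite.f_integrable QL.
have mf : measurable_fun setT f := measurable_int _ fint.
have mfp : measurable_fun setT (f \o piXZ) := measurableT_comp mf mpiXZ.
have fp0 : forall w, 0 <= (f \o piXZ) w by move=> w; exact: f0.
pose lamM := dens P mfp fp0.
set lam := (fun E => _).
have lamE : forall E, lam E = lamM E by [].
have hi : forall D, measurable D -> lam (piXZ @^-1` D) = Q D.
  move=> D mD; rewrite /lam.
  rewrite -(@ge0_integral_pushforward _ _ _ _ _ piXZ mpiXZ P D f mD (measurable_funTS mf) (fun u _ => f0 u)).
  by rewrite (Radon_Nikodym_SigmaFinite.f_integral QL mD).
have hii : forall A B, measurable A -> measurable B ->
    lam (A `*` B `*` setT) = P (A `*` B `*` setT).
  move=> A B mA mB.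
  have mAT : measurable (A `*` @setT Z) by apply: measurableX.
  pose h := f \_ (A `*` @setT Z).
  have mh : measurable_fun setT h.
    exact: ((measurable_restrictT f mAT).1 (measurable_funTS mf)).
  have h0 : forall u, 0 <= h u by move=> u; rewrite /h patchE; case: ifPn.
  transitivity (\int[P]_(w in setT `*` B `*` setT) h (piXZ w)).
    apply: int_patch => -[[x y] z]; rewrite /h !patchE !in_setX !in_setT /=.
    by case: (x \in A); case: (y \in B).
  rewrite -(S2 B mB h mh h0).
  pose g := (fun x => nux x B) \_ A.
  have mg : measurable_fun setT g.
    exact: ((measurable_restrictT (fun x => nux x B) mA).1 (measurable_funTS (mkern nux mB))).
  have g0 : forall x, 0 <= g x by move=> x; rewrite /g patchE; case: ifPn.
  transitivity (\int[L]_u ((g \o fst) u * f u)).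
    apply: eq_integral => -[x z] _; rewrite /h /g /= !patchE !in_setX in_setT /=.
    by case: (x \in A) => /=; rewrite ?mul0e ?mule0 // muleC.
  rewrite (Radon_Nikodym_SigmaFinite.change_of_variables QL _ measurableT); last 2 first.
    by move=> u; exact: g0.
    exact: (measurableT_comp mg measurable_fst).
  transitivity (\int[mu]_x g x).
    rewrite -(@ge0_integral_pushforward _ _ _ _ _ fst measurable_fst Q setT g measurableT (measurable_funTS mg) (fun u _ => g0 u)).
    apply: eq_measure_integral => A0 mA0 _.
    by rewrite /= /pushforward -HQ1.
  transitivity (\int[mu]_(x in A) nux x B).
    by apply: int_patch => x; rewrite /g !patchE in_setT.
  rewrite -HXY // setXT hP //; apply: preT => //; exact: measurableX.
have h1 : lamM setT = 1.
  by have := hi setT measurableT; rewrite preimage_setT probability_setT.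
have plam : is_prob lam := @is_probP _ _ _ lamM h1.
have hiv : meq (projXY lam) (projXY l).
  case: plam => Pl hPl D mD.
  have mfD : measurable ((fun p : (X * Y * Z)%type => p.1) @^-1` D).
    by apply: preT => //; exact: measurable_fst.
  rewrite /projXY -hPl // -hP //.
  apply: (@prod_unique _ _ _ _ _ (fpush Pl (@measurable_fst _ _ (X * Y)%type Z))
                        (fpush P (@measurable_fst _ _ (X * Y)%type Z))) => //.
    exact: (fin_num_fun_lty (fin_num_measure _)).
  move=> A B mA mB; rewrite /= /fpush /=.
  have mABT : measurable (A `*` B `*` @setT Z).
    by apply: measurableX => //; exact: measurableX.
  by rewrite -setXT hPl // hii.
split; last exact: hi.
split; last exact: hiv.
case: hl => _ [_ [hnu _]].
split => //; split; [|split].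
- move=> E mE; change (lam (piXZ @^-1` (fst @^-1` E)) = mu E).
  rewrite hi; first exact: HQ1.
  by apply: preT => //; exact: measurable_fst.
- move=> E mE; rewrite /proj2 hiv; first exact: hnu.
  by apply: preT => //; exact: measurable_snd.
- move=> E mE; change (lam (piXZ @^-1` (snd @^-1` E)) = ga E).
  rewrite hi; first exact: HQ2.
  by apply: preT => //; exact: measurable_snd.
Qed.


Lemma part3a : extreme_point (PiXY mu nu ga l) l -> extreme_point (Pi2 mu ga) (projXZ l).
Proof.
move=> [_ ext].
have hLl : meq L (projXZ l).
  move=> D mD; rewrite /L /fpush /= hP //; exact: preT mpiXZ _ mD.
case: (hl) => hlp [hmu [hnu hga]].
split.
  split; first by apply: (@is_prob_meq _ _ _ _ _ _ hLl); apply: (@is_probP _ _ _ L); rewrite /= /fpush preimage_setT probability_setT.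
  by split.
move=> p1 p2 t Hp1 Hp2 t01 Hl D mD.
case: Hp1 => [[Q1 hQ1] [h11 h12]]; case: Hp2 => [[Q2 hQ2] [h21 h22]].
have mfst : forall E : set X, measurable E -> measurable (@fst X Z @^-1` E).
  by move=> E mE; apply: preT => //; exact: measurable_fst.
have msnd : forall E : set Z, measurable E -> measurable (@snd X Z @^-1` E).
  by move=> E mE; apply: preT => //; exact: measurable_snd.
have HQ11 : meq (proj1 Q1) mu by move=> E mE; rewrite -h11 // /proj1 hQ1 //; exact: mfst.
have HQ12 : meq (proj2 Q1) ga by move=> E mE; rewrite -h12 // /proj2 hQ1 //; exact: msnd.
have HQ21 : meq (proj1 Q2) mu by move=> E mE; rewrite -h21 // /proj1 hQ2 //; exact: mfst.
have HQ22 : meq (proj2 Q2) ga by move=> E mE; rewrite -h22 // /proj2 hQ2 //; exact: msnd.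
have LQ : forall A, measurable A -> L A = t%:E * Q1 A + (1 - t)%:E * Q2 A.
  by move=> A mA; rewrite hLl // Hl // hQ1 // hQ2.
have dom1 : Q1 `<< L.
  apply/null_content_dominatesP => A mA LA0.
  by have [] := @conv0 _ t _ _ t01 (measure_ge0 Q1 A) (measure_ge0 Q2 A) (esym (etrans (esym LA0) (LQ A mA))).
have dom2 : Q2 `<< L.
  apply/null_content_dominatesP => A mA LA0.
  by have [] := @conv0 _ t _ _ t01 (measure_ge0 Q1 A) (measure_ge0 Q2 A) (esym (etrans (esym LA0) (LQ A mA))).
have [PL1 hi1] := S3 Q1 HQ11 HQ12 dom1.
have [PL2 hi2] := S3 Q2 HQ21 HQ22 dom2.
set f1 := Radon_Nikodym_SigmaFinite.f Q1 L in PL1 hi1.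
set f2 := Radon_Nikodym_SigmaFinite.f Q2 L in PL2 hi2.
have f10 : forall u, 0 <= f1 u := Radon_Nikodym_SigmaFinite.f_ge0 dom1.
have f20 : forall u, 0 <= f2 u := Radon_Nikodym_SigmaFinite.f_ge0 dom2.
have mf1 : measurable_fun setT f1 :=
  measurable_int _ (Radon_Nikodym_SigmaFinite.f_integrable dom1).
have mf2 : measurable_fun setT f2 :=
  measurable_int _ (Radon_Nikodym_SigmaFinite.f_integrable dom2).
case/andP: (t01) => t0 t1.
have t0' : (0 <= t%:E) by rewrite lee_fin ltW.
have t1' : (0 <= (1 - t)%:E) by rewrite lee_fin subr_ge0 ltW.
pose s u := t%:E * f1 u + (1 - t)%:E * f2 u.
have ms : measurable_fun setT s.
  apply: emeasurable_funD; apply: emeasurable_funM => //; exact: measurable_cst.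
have hae : ae_eq L setT (EFin \o cst 1%R) s.
  apply: integral_ae_eq => //.
    exact: finite_measure_integrable_cst.
  move=> E _ mE.
  transitivity (\int[L]_(x in E) (cst 1) x) => //.
  rewrite integral_cst // mul1e /s ge0_integralD //; last 4 first.
  - by move=> x _; apply: mule_ge0.
  - by apply: emeasurable_funM => //; exact: measurable_funTS.
  - by move=> x _; apply: mule_ge0.
  - by apply: emeasurable_funM => //; exact: measurable_funTS.
  rewrite ge0_integralZl //; last exact: measurable_funTS.
  rewrite ge0_integralZl //; last exact: measurable_funTS.
  rewrite -(Radon_Nikodym_SigmaFinite.f_integral dom1 mE).
  by rewrite -(Radon_Nikodym_SigmaFinite.f_integral dom2 mE); exact: LQ.
have [N [mN LN0 subN]] := hae.
have Hmix : meq l (fun A => t%:E * (\int[P]_(w in A) f1 (piXZ w))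
                      + (1 - t)%:E * (\int[P]_(w in A) f2 (piXZ w))).
  move=> E mE; rewrite -hP //.
  transitivity (\int[P]_(w in E) (cst 1) w); first by rewrite integral_cst // mul1e.
  transitivity (\int[P]_(w in E) s (piXZ w)).
    apply: ae_eq_integral => //.
    - exact: measurable_funTS (measurableT_comp ms mpiXZ).
    - exists (piXZ @^-1` N); split.
      + by apply: preT => //; exact: mpiXZ.
      + exact: LN0.
      + move=> w /= hw; apply: subN => /= h1; apply: hw => _; exact: h1.
  rewrite /s ge0_integralD //; last 4 first.
  - by move=> x _; apply: mule_ge0.
  - apply: emeasurable_funM => //.
    exact: measurable_funTS (measurableT_comp mf1 mpiXZ).
  - by move=> x _; apply: mule_ge0.
  - apply: emeasurable_funM => //.
    exact: measurable_funTS (measurableT_comp mf2 mpiXZ).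
  rewrite ge0_integralZl //; last exact: measurable_funTS (measurableT_comp mf1 mpiXZ).
  by rewrite ge0_integralZl //; exact: measurable_funTS (measurableT_comp mf2 mpiXZ).
have := ext _ _ t PL1 PL2 t01 Hmix.
move=> e12.
rewrite -hQ1 // -hQ2 // -hi1 // -hi2 //; apply: e12.
by apply: preT => //; exact: mpiXZ.
Qed.

End three.
Arguments piXZ {dX dY dZ X Y Z}.
Arguments mpiXZ {dX dY dZ X Y Z}.

Section final.
Context {R : realType}.

Lemma convK (t : R) (a : \bar R) : a \is a fin_num -> t%:E * a + (1 - t)%:E * a = a.
Proof.
move: a => [r| |] //= _.
by rewrite -!EFinM -EFinD mulrBl mul1r addrC subrK.
Qed.

Lemma prob_fin d (T : measurableType d) (m : set T -> \bar R) A :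
  is_prob m -> measurable A -> m A \is a fin_num.
Proof. by move=> [Q hQ] mA; rewrite -hQ // fin_num_measure. Qed.

Lemma is_prob_push d dU (T : measurableType d) (U : measurableType dU) (f : T -> U)
  (mf : measurable_fun setT f) (m : set T -> \bar R) :
  is_prob m -> is_prob (fun E => m (f @^-1` E)).
Proof.
move=> [Q hQ].
apply: (@is_prob_meq R _ _ (fpush Q mf)).
  by apply: (@is_probP _ _ _ (fpush Q mf)); rewrite /= /fpush preimage_setT probability_setT.
by move=> A mA; rewrite /= /fpush hQ //; exact: preT.
Qed.

Lemma lift_ext d dU (T : measurableType d) (U : measurableType dU) (f : T -> U)
  (mf : measurable_fun setT f) (S : set (set T -> \bar R)) (S2 : set (set U -> \bar R))
  (l : set T -> \bar R) :
  S l -> (forall r, S r -> is_prob r) ->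
  (forall r, S r -> S2 (fun E => r (f @^-1` E))) ->
  extreme_point [set r | S r /\ meq (fun E => r (f @^-1` E)) (fun E => l (f @^-1` E))] l ->
  extreme_point S2 (fun E => l (f @^-1` E)) ->
  extreme_point S l.
Proof.
move=> Sl Sprob SS2 [_ e1] [_ e2]; split => // m1 m2 t Sm1 Sm2 t01 hl.
have hpre : forall A, measurable A -> measurable (f @^-1` A) by move=> A mA; exact: preT.
have hproj : meq (fun E => l (f @^-1` E))
    (fun A => t%:E * m1 (f @^-1` A) + (1 - t)%:E * m2 (f @^-1` A)).
  by move=> A mA; rewrite hl //; exact: hpre.
have e := e2 _ _ t (SS2 _ Sm1) (SS2 _ Sm2) t01 hproj.
have m1l : meq (fun E => m1 (f @^-1` E)) (fun E => l (f @^-1` E)).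
  move=> A mA; rewrite hproj // -(e A mA) convK //.
  by apply: prob_fin => //; [exact: Sprob|exact: hpre].
have m2l : meq (fun E => m2 (f @^-1` E)) (fun E => l (f @^-1` E)).
  by move=> A mA; rewrite -(e A mA); exact: m1l.
exact: (e1 m1 m2 t (conj Sm1 m1l) (conj Sm2 m2l) t01 hl).
Qed.

Lemma ext_sub d (T : measurableType d) (S S' : set (set T -> \bar R)) l :
  S' `<=` S -> S' l -> extreme_point S l -> extreme_point S' l.
Proof.
by move=> SS' S'l [_ e]; split => // m1 m2 t h1 h2 t01 hm; exact: (e m1 m2 t (SS' _ h1) (SS' _ h2) t01 hm).
Qed.

End final.
Arguments is_prob_push {R d dU T U f} mf {m}.
Arguments lift_ext {R d dU T U f} mf {S S2 l}.

Theorem mainTheorem13 (R : realType)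
  (TX TY TZ : completePseudoMetricType R)
  (hTX : hausdorff_space TX) (hTY : hausdorff_space TY) (hTZ : hausdorff_space TZ)
  (sTX : separable_space TX) (sTY : separable_space TY) (sTZ : separable_space TZ)
  (mu : probability (Borel TX) R) (nu : probability (Borel TY) R)
  (ga : probability (Borel TZ) R)
  (l : set (Borel TX * Borel TY * Borel TZ) -> \bar R)
  (hl : Pi3 mu nu ga l) :
  (* (1) *)
  (extreme_point (Pi3 mu nu ga) l ->
     extreme_point (PiXY mu nu ga l) l /\
     extreme_point (PiYZ mu nu ga l) l /\
     extreme_point (PiXZ mu nu ga l) l) /\
  (* (2) *)
  (extreme_point (PiXY mu nu ga l) l ->
   extreme_point (Pi2 mu nu) (projXY l) ->
     extreme_point (Pi3 mu nu ga) l) /\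
  (* (3) *)
  (forall (nux : R.-pker Borel TX ~> Borel TY) (gax : R.-pker Borel TX ~> Borel TZ),
     (* l = (nu^x \times gamma^x) \otimes mu, on measurable rectangles *)
     (forall A B C, measurable A -> measurable B -> measurable C ->
        l (A `*` B `*` C) = \int[mu]_(x in A) (nux x B * gax x C)) ->
     (* l^XY = nu^x \otimes mu *)
     (forall A B, measurable A -> measurable B ->
        projXY l (A `*` B) = \int[mu]_(x in A) nux x B) ->
     (* l^XZ = gamma^x \otimes mu *)
     (forall A C, measurable A -> measurable C ->
        projXZ l (A `*` C) = \int[mu]_(x in A) gax x C) ->
     (* (3a) *)
     (extreme_point (PiXY mu nu ga l) l ->
        extreme_point (Pi2 mu ga) (projXZ l)) /\
     (* (3b) *)
     (extreme_point (PiXY mu nu ga l) l ->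
      extreme_point (PiXZ mu nu ga l) l ->
        extreme_point (Pi3 mu nu ga) l)).
Proof.
case: (hl) => hlp [hmu [hnu hga]].
have SS2XY : forall r, Pi3 mu nu ga r -> Pi2 mu nu (projXY r).
  move=> r [rp [r1 [r2 r3]]]; split; last by split.
  exact: (is_prob_push measurable_fst rp).
have SS2XZ : forall r, Pi3 mu nu ga r -> Pi2 mu ga (projXZ r).
  move=> r [rp [r1 [r2 r3]]]; split; last by split.
  exact: (is_prob_push mpiXZ rp).
have Pprob : forall r, Pi3 mu nu ga r -> is_prob r by move=> r [].
split.
  move=> ext; split; [|split]; apply: ext_sub ext => //;
    try (by move=> r []); by split.
split.
  move=> e1 e2.
  exact: (lift_ext measurable_fst hl Pprob SS2XY e1 e2).
move=> nux gax H3 HXY HXZ.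
case: hlp => P hP.
have h3a := @part3a R _ _ _ _ _ _ mu nu ga l hl P hP nux gax H3 HXY HXZ.
split; first exact: h3a.
move=> e1 e2.
exact: (lift_ext mpiXZ hl Pprob SS2XZ e2 (h3a e1)).
Qed.
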